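(* For all real $a\geq1$ and $\lambda\geq1$, $$\frac{c(\lambda a)}{\lambda a}\leq\frac{c(a)}{a}.$$
   Context: $c(a):=\inf\{A>0: E(1,a)\text{ symplectically embeds into } C(A)\}$ for real $a\geq1$, where $E(1,a)=\{\pi(x_1^2+y_1^2)+\pi(x_2^2+y_2^2)/a<1\}\subset\mathbb{R}^4$ with the standard symplectic form, and $C(A)=D^2(A)\times D^2(A)$ with $D^2(A)$ the open disc of area $A$. *)

(* Defs.v *)
(* R^4 is modelled as row vectors 'rV[R]_4 with
   coordinates (x1, y1, x2, y2) in this order. *)
From HB Require Import structures.
From mathcomp Require Import all_boot all_order all_algebra.
From mathcomp Require Import all_classical all_reals all_analysis.
Set Implicit Arguments. Unset Strict Implicit. Unset Printing Implicit Defensive.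
Import Order.TTheory GRing.Theory Num.Theory.
Import numFieldNormedType.Exports.
Local Open Scope ring_scope.
Local Open Scope classical_set_scope.

Definition cx1 {R : realType} (v : 'rV[R]_4) : R := v ord0 (@Ordinal 4 0 isT).
Definition cy1 {R : realType} (v : 'rV[R]_4) : R := v ord0 (@Ordinal 4 1 isT).
Definition cx2 {R : realType} (v : 'rV[R]_4) : R := v ord0 (@Ordinal 4 2 isT).
Definition cy2 {R : realType} (v : 'rV[R]_4) : R := v ord0 (@Ordinal 4 3 isT).

Definition omega0 {R : realType} (u w : 'rV[R]_4) : R :=
  cx1 u * cy1 w - cy1 u * cx1 w + cx2 u * cy2 w - cy2 u * cx2 w.

Fixpoint iterD {R : realType} (vs : seq 'rV[R]_4) (f : 'rV[R]_4 -> 'rV[R]_4)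
  : 'rV[R]_4 -> 'rV[R]_4 :=
  match vs with
  | [::] => f
  | v :: vs' => fun x => 'D_v (iterD vs' f) x
  end.

Definition smooth_on {R : realType} (U : set 'rV[R]_4) (f : 'rV[R]_4 -> 'rV[R]_4) :=
  forall vs : seq 'rV[R]_4,
    (forall x, U x -> forall v, derivable (iterD vs f) x v) /\
    (forall x, U x -> {for x, continuous (iterD vs f)}).

Definition symplectic_embedding {R : realType} (U T : set 'rV[R]_4)
  (f : 'rV[R]_4 -> 'rV[R]_4) :=
  [/\ smooth_on U f,
      (forall x y, U x -> U y -> f x = f y -> x = y),
      (forall x, U x -> forall u w, omega0 ('D_u f x) ('D_w f x) = omega0 u w)
    & (forall x, U x -> T (f x))].

Definition ellipsoid {R : realType} (a : R) : set 'rV[R]_4 :=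
  [set v | pi * (cx1 v ^+ 2 + cy1 v ^+ 2) + pi * (cx2 v ^+ 2 + cy2 v ^+ 2) / a < 1].

Definition polydisk {R : realType} (A : R) : set 'rV[R]_4 :=
  [set v | pi * (cx1 v ^+ 2 + cy1 v ^+ 2) < A /\ pi * (cx2 v ^+ 2 + cy2 v ^+ 2) < A].

Definition cap_c {R : realType} (a : R) : R :=
  inf [set A : R | 0 < A /\ exists f, symplectic_embedding (ellipsoid a) (polydisk A) f].

(* Main.v *)
Require Import Defs.
From HB Require Import structures.
From mathcomp Require Import all_boot all_order all_algebra.
From mathcomp Require Import all_classical all_reals all_analysis.
From mathcomp Require Import ring lra.
Import Order.TTheory GRing.Theory Num.Theory.
Import numFieldNormedType.Exports.
Local Open Scope ring_scope.
Local Open Scope classical_set_scope.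

Section S.
Context {R : realType}.
Local Notation V := 'rV[R]_4.

Lemma lim_nocvg (F : set_system V) : ~ cvg F -> lim F = 0.
Proof.
move=> H. rewrite /lim /lim_in /xget.
case: pselect => [[x Hx]|_]; first by exfalso; apply: H; apply/cvg_ex; exists x; exact/asboolP.
by apply/matrixP => i j; rewrite !mxE.
Qed.

Lemma mul_dnbhs (t : R) : t != 0 -> (fun h : R => t * h) @ 0^' --> 0^'.
Proof.
move=> t0.
have := @continuous_injective_withinNx R R (fun h => t * h) 0.
rewrite /= [t * _]mulr0; apply; first exact: mulrl_continuous.
by move=> y /eqP; rewrite mulf_eq0 (negbTE t0) /= => /eqP.
Qed.

Lemma cvg_resc (q : R -> V) (a t : R) (l : V) : t != 0 -> q @ 0^' --> l ->
  (fun h => a *: q (t * h)) @ 0^' --> a *: l.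
Proof.
move=> t0 ql.
apply: cvgZl_tmp.
have := cvg_comp _ _ (mul_dnbhs _ t0) ql.
exact.
Qed.

Lemma lim_resc (q : R -> V) (a t : R) : a != 0 -> t != 0 ->
  lim ((fun h => a *: q (t * h)) @ 0^') = a *: lim (q @ 0^').
Proof.
move=> a0 t0.
have [qc|qnc] := pselect (cvg (q @ 0^')).
  apply: cvg_lim => //. exact: (cvg_resc _ a _ _ t0 qc).
have nc : ~ cvg ((fun h => a *: q (t * h)) @ 0^').
  move=> qc; apply: qnc; apply/cvg_ex.
  exists (a^-1 *: lim ((fun h => a *: q (t * h)) @ 0^')).
  have H := cvg_resc _ a^-1 _ _ (invr_neq0 t0) qc.
  have E : (fun h => a^-1 *: (a *: q (t * (t^-1 * h)))) = q.
    by apply/funext => h; rewrite scalerA mulVf // scale1r mulrA mulfV // mul1r.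
  by rewrite E in H.
by rewrite (lim_nocvg _ nc) (lim_nocvg _ qnc) scaler0.
Qed.

Definition dq (F : V -> V) (x v : V) := fun k : R => k^-1 *: ((F \o shift x) (k *: v) - F x).

Lemma dq_scale (F : V -> V) (c t : R) (x v : V) : t != 0 ->
  dq (fun y => c *: F (t *: y)) x v = (fun h => (c * t) *: dq F (t *: x) v (t * h)).
Proof.
move=> t0; apply/funext => h; rewrite /dq /shift /=.
rewrite [t *: (_ + _)]scalerDr [t *: (h *: v)]scalerA -scalerBr !scalerA; congr (_ *: _).
by rewrite invfM mulrA -(mulrA c) mulfV // mulr1 mulrC.
Qed.

Lemma D_scale (F : V -> V) (c t : R) (x v : V) : t != 0 ->
  'D_v (fun y => c *: F (t *: y)) x = (c * t) *: 'D_v F (t *: x).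
Proof.
move=> t0.
have [->|c0] := eqVneq c 0.
  rewrite mul0r scale0r.
  have -> : (fun y => 0 *: F (t *: y)) = cst (0 : V) by apply/funext => y; rewrite scale0r.
  exact: derive_cst.
rewrite /derive -/(dq _ x v) -/(dq _ (t *: x) v) dq_scale //.
by apply: lim_resc => //; rewrite mulf_neq0.
Qed.

Lemma derivable_scale (F : V -> V) (c t : R) (x v : V) : t != 0 ->
  derivable F (t *: x) v -> derivable (fun y => c *: F (t *: y)) x v.
Proof.
move=> t0 dF; rewrite /derivable -/(dq _ x v) dq_scale //.
apply/cvg_ex; exists ((c * t) *: 'D_v F (t *: x)).
exact: (cvg_resc _ _ _ _ t0 dF).
Qed.

Lemma iterD_scale (vs : seq V) (F : V -> V) (c t : R) : t != 0 ->
  Defs.iterD vs (fun y => c *: F (t *: y)) = (fun y => (c * t ^+ seq.size vs) *: Defs.iterD vs F (t *: y)).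
Proof.
move=> t0; elim: vs => [|v vs IH] /=.
  by apply/funext => y; rewrite expr0 mulr1.
apply/funext => y; rewrite IH D_scale //.
by rewrite exprS mulrA -(mulrA c) (mulrC _ t) mulrA.
Qed.

Lemma cx1Z (k : R) (v : V) : cx1 (k *: v) = k * cx1 v. Proof. by rewrite /cx1 mxE. Qed.
Lemma cy1Z (k : R) (v : V) : cy1 (k *: v) = k * cy1 v. Proof. by rewrite /cy1 mxE. Qed.
Lemma cx2Z (k : R) (v : V) : cx2 (k *: v) = k * cx2 v. Proof. by rewrite /cx2 mxE. Qed.
Lemma cy2Z (k : R) (v : V) : cy2 (k *: v) = k * cy2 v. Proof. by rewrite /cy2 mxE. Qed.

Lemma sq_scale (k u v : R) : (k * u) ^+ 2 + (k * v) ^+ 2 = k ^+ 2 * (u ^+ 2 + v ^+ 2).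
Proof. by rewrite !exprMn mulrDr. Qed.

Lemma sqrt_sq (lam : R) : 1 <= lam -> (Num.sqrt lam) ^+ 2 = lam.
Proof. by move=> h; rewrite sqr_sqrtr // (le_trans ler01 h). Qed.

Lemma ell_scale (a lam : R) (x : V) : 1 <= a -> 1 <= lam ->
  ellipsoid (lam * a) x -> ellipsoid a ((Num.sqrt lam)^-1 *: x).
Proof.
move=> a1 l1; rewrite /ellipsoid /= cx1Z cy1Z cx2Z cy2Z !sq_scale exprVn sqrt_sq //.
set X1 := cx1 x ^+ 2 + cy1 x ^+ 2; set X2 := cx2 x ^+ 2 + cy2 x ^+ 2.
have a0 : a != 0 by rewrite gt_eqF // (lt_le_trans ltr01 a1).
have l0 : lam != 0 by rewrite gt_eqF // (lt_le_trans ltr01 l1).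
have P1 : 0 <= pi * X1 by apply: mulr_ge0; [exact: ltW (pi_gt0 _) | rewrite addr_ge0 ?sqr_ge0].
have li1 : lam^-1 <= 1 by rewrite invf_le1 // (lt_le_trans ltr01 l1).
have e1 : pi * (lam^-1 * X1) = lam^-1 * (pi * X1) by ring.
have e2 : pi * (lam^-1 * X2) / a = lam^-1 * (pi * X2 / a) by ring.
have e3 : pi * X2 / (lam * a) = lam^-1 * (pi * X2 / a) by rewrite invfM; ring.
rewrite e1 e2 e3 => H.
have : lam^-1 * (pi * X1) <= pi * X1.
  by rewrite -[leRHS]mul1r ler_wpM2r.
lra.
Qed.

Lemma ell_sub (a lam : R) (x : V) : 1 <= a -> 1 <= lam ->
  ellipsoid a x -> ellipsoid (lam * a) x.
Proof.
move=> a1 l1; rewrite /ellipsoid /=.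
set X2 := cx2 x ^+ 2 + cy2 x ^+ 2.
have a0 : 0 < a by rewrite (lt_le_trans ltr01 a1).
have P2 : 0 <= pi * X2 by apply: mulr_ge0; [exact: ltW (pi_gt0 _) | rewrite addr_ge0 ?sqr_ge0].
have : pi * X2 / (lam * a) <= pi * X2 / a.
  rewrite ler_wpM2l // lef_pV2 ?posrE ?mulr_gt0 // ?(lt_le_trans ltr01 l1) //.
  by rewrite -[leLHS]mul1r ler_wpM2r // ltW.
lra.
Qed.

Lemma poly_scale (A lam : R) (w : V) : 1 <= lam ->
  polydisk A w -> polydisk (lam * A) (Num.sqrt lam *: w).
Proof.
move=> l1; rewrite /polydisk /= cx1Z cy1Z cx2Z cy2Z !sq_scale sqrt_sq //.
have l0 : 0 < lam by rewrite (lt_le_trans ltr01 l1).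
move=> [H1 H2]; split.
  by rewrite mulrCA ltr_pM2l.
by rewrite mulrCA ltr_pM2l.
Qed.

Lemma emb_scale (a lam A : R) (f : V -> V) : 1 <= a -> 1 <= lam ->
  symplectic_embedding (ellipsoid a) (polydisk A) f ->
  symplectic_embedding (ellipsoid (lam * a)) (polydisk (lam * A))
    (fun y => Num.sqrt lam *: f ((Num.sqrt lam)^-1 *: y)).
Proof.
move=> a1 l1 [sm inj sym img].
have s0 : Num.sqrt lam != 0.
  by rewrite gt_eqF // sqrtr_gt0 (lt_le_trans ltr01 l1).
have si0 : (Num.sqrt lam)^-1 != 0 by rewrite invr_eq0.
split.
- move=> vs; have [d c] := sm vs; split.
    move=> x Ux w; rewrite iterD_scale //.
    by apply: derivable_scale => //; apply: d; apply: ell_scale.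
  move=> x Ux; rewrite iterD_scale //.
  have c1 := c _ (ell_scale _ _ _ a1 l1 Ux).
  have c2 := continuous_comp (@scaler_continuous _ _ (Num.sqrt lam)^-1 x) c1.
  exact: (continuous_comp c2 (@scaler_continuous _ _ _ _)).
- move=> x y Ux Uy /scalerI => /(_ s0) /inj.
  move=> /(_ (ell_scale _ _ _ a1 l1 Ux) (ell_scale _ _ _ a1 l1 Uy)) /scalerI => /(_ si0).
  done.
- move=> x Ux u w; rewrite !D_scale // mulfV // !scale1r.
  have U' := ell_scale _ _ _ a1 l1 Ux.
  have := sym _ U' u w.
  by move=> <-.
- move=> x Ux; apply: poly_scale => //; exact: img (ell_scale _ _ _ a1 l1 Ux).
Qed.

Lemma emb_sub (a lam A : R) (f : V -> V) : 1 <= a -> 1 <= lam ->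
  symplectic_embedding (ellipsoid (lam * a)) (polydisk A) f ->
  symplectic_embedding (ellipsoid a) (polydisk A) f.
Proof.
move=> a1 l1 [sm inj sym img]; split.
- move=> vs; have [d c] := sm vs; split.
    by move=> x Ux; apply: d; apply: ell_sub.
  by move=> x Ux; apply: c; apply: ell_sub.
- by move=> x y Ux Uy; apply: inj; apply: ell_sub.
- by move=> x Ux; apply: sym; apply: ell_sub.
- by move=> x Ux; apply: img; apply: ell_sub.
Qed.
End S.

Theorem lemma4p2 (R : realType) (a lambda : R) :
  1 <= a -> 1 <= lambda ->
  cap_c (lambda * a) / (lambda * a) <= cap_c a / a.
Proof.
move=> a1 l1.
have a0 : 0 < a by rewrite (lt_le_trans ltr01 a1).
have l0 : 0 < lambda by rewrite (lt_le_trans ltr01 l1).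
pose S (b : R) := [set A : R | 0 < A /\ exists f, symplectic_embedding (ellipsoid b) (polydisk A) f].
have lbS : forall b, lbound (S b) 0 by move=> b y [y0 _]; exact: ltW.
have key : cap_c (lambda * a) <= lambda * cap_c a.
  have [[A0 SA0]|empt] := pselect (exists A, S a A).
    have lb : lbound (S a) (lambda^-1 * cap_c (lambda * a)).
      move=> A [A0' [f hf]].
      rewrite ler_pdivrMl //.
      apply: (ge_inf (E := S (lambda * a))); first by exists 0; exact: lbS.
      split; first by rewrite mulr_gt0.
      by exists (fun y => Num.sqrt lambda *: f ((Num.sqrt lambda)^-1 *: y)); apply: emb_scale.
    by rewrite -ler_pdivrMl //; apply: lb_le_inf => //; exists A0.
  have e1 : S a = set0 by apply/seteqP; split => // x Sx; apply: empt; exists x.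
  have e2 : S (lambda * a) = set0.
    apply/seteqP; split => // x [x0 [f hf]]; apply: empt; exists x; split => //.
    by exists f; exact: (@emb_sub R a lambda x f a1 l1 hf).
  rewrite /cap_c -/(S a) -/(S (lambda * a)) e1 e2 inf0 mulr0.
  exact: lexx.
rewrite ler_pdivrMr ?mulr_gt0 //.
have -> : cap_c a / a * (lambda * a) = lambda * cap_c a.
  by field; rewrite gt_eqF.
exact: key.
Qed.
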